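(* There exists a permutation of the positive integers that does not contain any 4-term arithmetic progression with odd common difference as a subsequence.
   Context: A permutation of the positive integers is a sequence $(a_1,a_2,\ldots)$ in which every positive integer appears exactly once. A sequence contains a $k$-term arithmetic progression with common difference $d\neq 0$ as a subsequence if there are indices $i_1<i_2<\cdots<i_k$ with $a_{i_{m+1}} - a_{i_m} = d$ for all $1\le m<k$. The difference $d$ may be positive or negative. *)

(* Defs.v *)
(* Sequences a_1, a_2, ... are modelled as a : nat -> Z with a_{i+1} = a i. *)
From Stdlib Require Import ZArith Arith.
Open Scope Z_scope.

Definition is_perm_pos (a : nat -> Z) : Prop :=
  (forall i, 0 < a i) /\
  (forall z, 0 < z -> exists i, a i = z /\ forall j, a j = z -> j = i).

Definition contains_AP (a : nat -> Z) (k : nat) (d : Z) : Prop :=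
  exists idx : nat -> nat,
    (forall m, (m + 1 < k)%nat -> (idx m < idx (S m))%nat) /\
    (forall m, (m + 1 < k)%nat -> a (idx (S m)) - a (idx m) = d).

(* Main.v *)
Require Import Defs.
From Stdlib Require Import ZArith Arith Lia.
Open Scope Z_scope.

Definition aa (n : nat) : Z :=
  let j := Z.of_nat (n / 3) in
  match (n mod 3)%nat with
  | O => 4 * j + 1
  | 1%nat => 4 * j + 3
  | _ => 2 * j + 2
  end.

Lemma aa_form (n : nat) : exists j : nat,
  ((n = 3 * j)%nat /\ aa n = 4 * Z.of_nat j + 1) \/
  ((n = 3 * j + 1)%nat /\ aa n = 4 * Z.of_nat j + 3) \/
  ((n = 3 * j + 2)%nat /\ aa n = 2 * Z.of_nat j + 2).
Proof.
  exists (n / 3)%nat. unfold aa.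
  pose proof (Nat.div_mod n 3 ltac:(lia)).
  pose proof (Nat.mod_upper_bound n 3 ltac:(lia)).
  cbv zeta. destruct (n mod 3)%nat as [|[|[|r]]] eqn:E.
  - left; split; [lia|reflexivity].
  - right; left; split; [lia|reflexivity].
  - right; right; split; [lia|reflexivity].
  - lia.
Qed.

Lemma aa_at (j r : nat) : (r < 3)%nat ->
  aa (3 * j + r) = match r with O => 4 * Z.of_nat j + 1 | 1%nat => 4 * Z.of_nat j + 3 | _ => 2 * Z.of_nat j + 2 end.
Proof.
  intros Hr. unfold aa.
  replace ((3 * j + r) / 3)%nat with j.
  2:{ apply (Nat.div_unique _ 3 _ r); lia. }
  replace ((3 * j + r) mod 3)%nat with r.
  2:{ apply (Nat.mod_unique _ 3 j); lia. }
  destruct r as [|[|[|r]]]; lia.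
Qed.

Lemma key (i k : nat) : aa i mod 2 = 1 -> aa k mod 2 = 0 -> aa i < 2 * aa k -> (i < k)%nat.
Proof.
  destruct (aa_form i) as [p Hp]; destruct (aa_form k) as [q Hq].
  intros H1 H2 H3.
  destruct Hp as [[-> Ha]|[[-> Ha]|[-> Ha]]]; rewrite Ha in *;
  destruct Hq as [[-> Hb]|[[-> Hb]|[-> Hb]]]; rewrite Hb in *; Z.div_mod_to_equations; lia.
Qed.

Theorem theorem2 :
  exists a : nat -> Z, is_perm_pos a /\
    forall d : Z, d <> 0 -> Z.odd d = true -> ~ contains_AP a 4 d.
Proof.
  exists aa. split.
  - split.
    + intros i. destruct (aa_form i) as [p [[_ H]|[[_ H]|[_ H]]]]; lia.
    + intros z Hz.
      pose proof (Z.div_mod z 4 ltac:(lia)) as Hd.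
      pose proof (Z.mod_pos_bound z 4 ltac:(lia)) as Hb.
      assert (Hq : 0 <= z / 4) by (apply Z.div_pos; lia).
      set (q := z / 4) in *. set (m := z mod 4) in *.
      assert (Hex : exists n, aa n = z).
      { assert (m = 0 \/ m = 1 \/ m = 2 \/ m = 3) as [Hm|[Hm|[Hm|Hm]]] by lia.
        - exists (3 * Z.to_nat (2 * q - 1) + 2)%nat. rewrite aa_at by lia. lia.
        - exists (3 * Z.to_nat q + 0)%nat. rewrite aa_at by lia. lia.
        - exists (3 * Z.to_nat (2 * q) + 2)%nat. rewrite aa_at by lia. lia.
        - exists (3 * Z.to_nat q + 1)%nat. rewrite aa_at by lia. lia. }
      destruct Hex as [n Hn]. exists n. split; [exact Hn|].
      intros j Hj. rewrite <- Hn in Hj.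
      destruct (aa_form n) as [p Hp]; destruct (aa_form j) as [r Hr].
      destruct Hp as [[-> Ha]|[[-> Ha]|[-> Ha]]]; rewrite Ha in *;
      destruct Hr as [[-> Hc]|[[-> Hc]|[-> Hc]]]; rewrite Hc in *; lia.
  - intros d Hd Hodd [idx [Hlt Hdif]].
    apply Z.odd_spec in Hodd. destruct Hodd as [c Hc].
    pose proof (Hlt 0%nat ltac:(lia)). pose proof (Hlt 1%nat ltac:(lia)).
    pose proof (Hlt 2%nat ltac:(lia)).
    pose proof (Hdif 0%nat ltac:(lia)). pose proof (Hdif 1%nat ltac:(lia)).
    pose proof (Hdif 2%nat ltac:(lia)).
    assert (P0 : 0 < aa (idx 0%nat)) by (destruct (aa_form (idx 0%nat)) as [p [[_ H']|[[_ H']|[_ H']]]]; lia).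
    assert (P3 : 0 < aa (idx 3%nat)) by (destruct (aa_form (idx 3%nat)) as [p [[_ H']|[[_ H']|[_ H']]]]; lia).
    assert (aa (idx 2%nat) mod 2 = 0 \/ aa (idx 2%nat) mod 2 = 1) as [E|E]
      by (pose proof (Z.mod_pos_bound (aa (idx 2%nat)) 2); lia).
    + assert (idx 3 < idx 2)%nat by (apply key; Z.div_mod_to_equations; lia). lia.
    + assert (idx 2 < idx 1)%nat by (apply key; Z.div_mod_to_equations; lia). lia.
Qed.
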